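(* Let $(a_i)_{i=1}^n$, $a_i=(m_i,x_i,v_i)$, be a system of $n$ particles (as defined in the context) with sticky trajectories $\gamma_1,\dots,\gamma_n$. Let $P_0=(0,0)$ and $P_k=\left(\sum_{i=1}^k m_i,\ \sum_{i=1}^k m_i v_i\right)$ for $1\le k\le n$, let $f:[0,\sum_{i=1}^n m_i]\to\mathbb{R}$ be the continuous piecewise linear function whose graph is the union of the segments $[P_{k-1},P_k]$, $1\le k\le n$, and let $r$ be the convex envelope of $f$ (the supremum of all convex functions $g\le f$). Let $0=k_0<k_1<\cdots<k_\ell=n$ be all the indices $k\in\{0,\dots,n\}$ for which $P_k$ lies on the graph of $r$, and for $1\le j\le \ell$ let the polygon $T_j$ be the set of particles $\{a_i : k_{j-1}<i\le k_j\}$, whose slope is the slope of the segment from $P_{k_{j-1}}$ to $P_{k_j}$ (equivalently of $r$ on the corresponding interval). Then the system has exactly $\ell$ clusters $A_1,\dots,A_\ell$ (ordered by initial positions), with $A_j=T_j$ for each $j$, and the (eventual) velocity of the cluster $A_j$ equals the slope of $T_j$.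
   Context: A particle is a triple $a=(m,x,v)\in\mathbb{R}_{>0}\times\mathbb{R}\times\mathbb{R}$ (mass, initial position, initial velocity). A system of $n$ particles is an $n$-tuple $(a_i)_{i=1}^n$ with $x_i<x_j$ iff $i<j$. To each particle is associated a unique continuous piecewise linear trajectory $\gamma_i:[0,\infty)\to\mathbb{R}$ such that: (1) $\gamma_i(0)=x_i$ and $\dot\gamma_i(0+)=v_i$; (2) (stickiness) if $\gamma_i(s)=\gamma_j(s)$ then $\gamma_i(t)=\gamma_j(t)$ for all $t\ge s$; (3) (conservation of momentum) if $\gamma_{i_1}(t)=\cdots=\gamma_{i_p}(t)\neq\gamma_i(t)$ for all other $i$, at some $t>0$, then $\dot\gamma_{i_q}(t+)=\frac{\sum_{k=1}^p m_{i_k}\dot\gamma_{i_k}(t-)}{\sum_{k=1}^p m_{i_k}}$ for each $q$. Here $\dot\gamma(t\pm)$ denotes one-sided derivatives. Two particles $a_i,a_j$ lie in the same cluster iff $\lim_{t\to\infty}|\gamma_i(t)-\gamma_j(t)|=0$; clusters are ordered so that $A_i$ precedes $A_j$ iff initial positions of particles in $A_i$ are smaller than those in $A_j$. The velocity of a cluster is the common velocity $\dot\gamma(t+)$ of its particles for all sufficiently large $t$. *)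

(* Defs.v *)
From HB Require Import structures.
From mathcomp Require Import all_boot all_order all_algebra.
From mathcomp Require Import all_classical all_reals all_analysis.
Set Implicit Arguments. Unset Strict Implicit. Unset Printing Implicit Defensive.
Import Order.TTheory GRing.Theory Num.Theory.
Import numFieldNormedType.Exports.
Local Open Scope classical_set_scope.
Local Open Scope ring_scope.

Definition right_deriv (R : realType) (g : R -> R) (t d : R) : Prop :=
  (fun s => (g s - g t) / (s - t)) @ t^'+ --> d.
Definition left_deriv (R : realType) (g : R -> R) (t d : R) : Prop :=
  (fun s => (g s - g t) / (s - t)) @ t^'- --> d.

Definition cont_pw_linear (R : realType) (g : R -> R) : Prop :=
  exists bs : seq R, forall a b : R, 0 <= a -> a < b ->
    (forall c, c \in bs -> ~ (a < c < b)) ->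
    exists c0 c1 : R, forall t, a <= t <= b -> g t = c0 + c1 * t.

Definition sticky_trajectories (R : realType) (n : nat)
  (m x v : 'I_n -> R) (gam : 'I_n -> R -> R) : Prop :=
  [/\ (forall i, cont_pw_linear (gam i)),
      (forall i, gam i 0 = x i /\ right_deriv (gam i) 0 (v i)),
      (forall i j s, 0 <= s -> gam i s = gam j s ->
         forall t, s <= t -> gam i t = gam j t) &
      (* conservation of momentum at the collision group of particle i *)
      (forall t, 0 < t -> forall i q, gam q t = gam i t ->
         forall (vl : 'I_n -> R) (vr : R),
           (forall k, gam k t = gam i t -> left_deriv (gam k) t (vl k)) ->
           right_deriv (gam q) t vr ->
           vr = (\sum_(k | gam k t == gam i t) m k * vl k) /
                (\sum_(k | gam k t == gam i t) m k))].

Definition same_cluster (R : realType) (n : nat) (gam : 'I_n -> R -> R)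
  (i j : 'I_n) : Prop :=
  `|gam i t - gam j t| @[t --> +oo] --> (0 : R).

Definition convex_on (R : realType) (a b : R) (g : R -> R) : Prop :=
  forall y z l, a <= y <= b -> a <= z <= b -> 0 <= l <= 1 ->
    g (l * y + (1 - l) * z) <= l * g y + (1 - l) * g z.

Definition conv_env (R : realType) (a b : R) (f : R -> R) (y : R) : R :=
  sup [set g y | g in [set g : R -> R | convex_on a b g /\
                                     (forall z, a <= z <= b -> g z <= f z)]].

(* M k = sum_{i<=k} m_i, Q k = sum_{i<=k} m_i v_i  (1-based k; here i : 'I_n 0-based) *)
Definition Msum (R : realType) (n : nat) (m : 'I_n -> R) (k : nat) : R :=
  \sum_(i < n | (i < k)%N) m i.
Definition Qsum (R : realType) (n : nat) (m v : 'I_n -> R) (k : nat) : R :=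
  \sum_(i < n | (i < k)%N) m i * v i.

(* Main.v *)
Require Import Defs.
From HB Require Import structures.
From mathcomp Require Import all_boot all_order all_algebra.
From mathcomp Require Import all_classical all_reals all_analysis.
From mathcomp Require Import ring lra.
Import Order.TTheory GRing.Theory Num.Theory.
Import numFieldNormedType.Exports.
Local Open Scope classical_set_scope.
Local Open Scope ring_scope.

Section Comb.
Variables (Z : nat -> bool) (n : nat).

Definition KK := [seq k <- iota 0 n.+1 | Z k].
Definition kk j := nth 0%N KK j.
Definition ll := (size KK).-1.

Lemma KK_sorted : sorted ltn KK.
Proof. apply: sorted_filter; [exact: ltn_trans | exact: iota_ltn_sorted]. Qed.

Lemma mem_KK c : (c \in KK) = (c <= n)%N && Z c.
Proof. by rewrite /KK mem_filter mem_iota /= add0n ltnS andbC. Qed.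

Lemma KK_size (Z0 : Z 0%N) : (0 < size KK)%N.
Proof. by rewrite /KK /= Z0. Qed.

Lemma kk0 (Z0 : Z 0%N) : kk 0 = 0%N.
Proof. by rewrite /kk /KK /= Z0. Qed.

Lemma kkl (Zn : Z n) : kk ll = n.
Proof.
rewrite /kk /ll /KK -addn1 iotaD filter_cat /= add0n Zn size_cat /= addn1 /=.
by rewrite nth_cat ltnn subnn.
Qed.

Lemma nth_inv a b : (a < size KK)%N -> (b < size KK)%N -> (kk a < kk b)%N -> (a < b)%N.
Proof.
move=> ha hb h; rewrite ltnNge; apply/negP; rewrite leq_eqVlt => /orP[/eqP e|ba].
  by move: h; rewrite e ltnn.
have := sorted_ltn_nth ltn_trans 0%N KK_sorted b a hb ha ba.
rewrite -/(kk b) -/(kk a) => h2.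
by have := ltn_trans h h2; rewrite ltnn.
Qed.

Lemma kk_mem j : (j < size KK)%N -> (kk j <= n)%N && Z (kk j).
Proof. by move=> h; rewrite -mem_KK; apply: mem_nth. Qed.

Lemma kk_block (Z0 : Z 0%N) j0 : (0 < j0 <= ll)%N ->
  [/\ (kk j0.-1 < kk j0)%N, Z (kk j0.-1), Z (kk j0), (kk j0 <= n)%N &
      forall c, (kk j0.-1 < c < kk j0)%N -> ~~ Z c].
Proof.
move=> /andP[j0p jl].
have hs : (j0 < size KK)%N by move: jl; rewrite /ll; case: (size KK) (KK_size Z0).
have hs' : (j0.-1 < size KK)%N by apply: leq_ltn_trans hs; exact: leq_pred.
have lt : (kk j0.-1 < kk j0)%N.
  by apply: (sorted_ltn_nth ltn_trans 0%N KK_sorted) => //; rewrite prednK.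
have /andP[_ Za] := @kk_mem _ hs'.
have /andP[bn Zb] := @kk_mem _ hs.
split=> // c /andP[h1 h2]; apply/negP => Zc.
have cK : c \in KK by rewrite mem_KK Zc andbT; apply: leq_trans bn; exact: ltnW.
have cq : c = kk (index c KK) by rewrite /kk nth_index.
have hq : (index c KK < size KK)%N by rewrite index_mem.
rewrite cq in h1 h2.
have q1 := @nth_inv _ _ hs' hq h1.
have q2 := @nth_inv _ _ hq hs h2.
have q3 : (j0 <= index c KK)%N by rewrite -(prednK j0p).
by have := leq_ltn_trans q3 q2; rewrite ltnn.
Qed.

Lemma kk_find (Z0 : Z 0%N) (Zn : Z n) i : (i < n)%N -> exists j0, (0 < j0 <= ll)%N /\ (kk j0.-1 <= i < kk j0)%N.
Proof.
move=> hi.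
have hh : has (fun k => i < k)%N KK by apply/hasP; exists n => //; rewrite mem_KK leqnn Zn.
set j0 := find (fun k => i < k)%N KK.
have hj : (j0 < size KK)%N by rewrite -has_find.
have ik : (i < kk j0)%N by exact: (nth_find 0%N hh).
have j0p : (0 < j0)%N.
  rewrite lt0n; apply/negP => /eqP e; by move: ik; rewrite e kk0.
exists j0; split.
  by rewrite j0p /ll -ltnS prednK // KK_size.
rewrite ik andbT.
have hb : (j0.-1 < find (fun k => i < k)%N KK)%N by rewrite -/j0 prednK.
have := @before_find _ 0%N (fun k => i < k)%N KK j0.-1 hb.
by move/negbT; rewrite -leqNgt.
Qed.

End Comb.
Section Grid.
Variables (R : realType) (n : nat) (m x v : 'I_n.+1 -> R) (gam : 'I_n.+1 -> R -> R).
Hypothesis pw : forall i, cont_pw_linear (gam i).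

Let bsf := projT1 (choice pw).
Lemma bsfP i a b : 0 <= a -> a < b -> (forall c, c \in bsf i -> ~ (a < c < b)) ->
    exists c0 c1 : R, forall t, a <= t <= b -> gam i t = c0 + c1 * t.
Proof. exact: (projT2 (choice pw) i a b). Qed.

Definition bsall := flatten [seq bsf i | i <- enum 'I_n.+1].
Definition spos := sort <=%R (undup [seq c <- bsall | 0 < c]).
Definition N := size spos.
Definition tau p := nth 0 (0 :: spos) p.

Lemma spos_sorted : sorted <%R spos.
Proof. by rewrite /spos sort_lt_sorted undup_uniq. Qed.

Lemma mem_spos c : (c \in spos) = (c \in bsall) && (0 < c).
Proof. by rewrite /spos mem_sort mem_undup mem_filter andbC. Qed.

Lemma tau0 : tau 0 = 0. Proof. by []. Qed.

Lemma tau_ge0 p : 0 <= tau p.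
Proof.
rewrite /tau; case: p => [|p] //=.
case: (ltnP p N) => hp; last by rewrite nth_default.
have := mem_nth 0 hp; rewrite mem_spos => /andP[_ /ltW] //.
Qed.

Lemma tau_lt p q : (p < q)%N -> (q <= N)%N -> tau p < tau q.
Proof.
case: q => [//|q] hpq hq; rewrite /tau /=.
have hq' : (q < size spos)%N by [].
case: p hpq => [|p] hpq /=.
  by have := mem_nth 0 hq'; rewrite mem_spos => /andP[].
apply: (sorted_ltn_nth lt_trans 0 spos_sorted) => //; rewrite inE //; apply: leq_ltn_trans hq'; exact: ltnW.
Qed.

Lemma tau_le p q : (p <= q)%N -> (q <= N)%N -> tau p <= tau q.
Proof.
rewrite leq_eqVlt => /orP[/eqP -> //|hpq hq]; exact/ltW/(@tau_lt p q).
Qed.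

Lemma tau_in c : c \in spos -> exists2 q, (0 < q <= N)%N & c = tau q.
Proof.
move=> hc; exists (index c spos).+1; first by rewrite /= index_mem.
by rewrite /tau /= nth_index.
Qed.

Lemma gap p c : (p < N)%N -> c \in bsall -> ~ (tau p < c < tau p.+1).
Proof.
move=> hp hc /andP[h1 h2].
have cpos : 0 < c by apply: le_lt_trans h1; exact: tau_ge0.
have [q /andP[q0 qN] ceq] : exists2 q, (0 < q <= N)%N & c = tau q by apply: tau_in; rewrite mem_spos hc.
rewrite ceq in h1 h2.
case: (leqP q p) => hqp.
  by have := @tau_le q p hqp (ltnW hp); rewrite leNgt h1.
by have := @tau_le p.+1 q hqp qN; rewrite leNgt h2.
Qed.

Lemma gapN c : c \in bsall -> ~ (tau N < c).
Proof.
move=> hc h1.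
have cpos : 0 < c by apply: le_lt_trans h1; exact: tau_ge0.
have [q /andP[q0 qN] ceq] : exists2 q, (0 < q <= N)%N & c = tau q by apply: tau_in; rewrite mem_spos hc.
by have := @tau_le q N qN (leqnn N); rewrite leNgt -ceq h1.
Qed.

Lemma affine_ab i a b : 0 <= a -> a < b -> (forall c, c \in bsall -> ~ (a < c < b)) ->
  forall t u, a <= t <= b -> a < u <= b ->
  gam i t = gam i a + (gam i u - gam i a) / (u - a) * (t - a).
Proof.
move=> a0 ab hc.
have [c0 [c1 H]] : exists c0 c1 : R, forall t, a <= t <= b -> gam i t = c0 + c1 * t.
  apply: bsfP => // c ci; apply: hc.
  by apply/flatten_mapP; exists i => //; rewrite mem_enum.
move=> t u ht /andP[hu1 hu2].
have ha : a <= a <= b by rewrite lexx ltW.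
have hu : a <= u <= b by rewrite ltW.
rewrite (H t ht) (H a ha) (H u hu).
have ua : u - a != 0 by rewrite subr_eq0 gt_eqF.
by field.
Qed.


Lemma right_deriv_loc (g : R -> R) (t d dl : R) : 0 < dl ->
  (forall s, t < s < t + dl -> g s = g t + d * (s - t)) -> right_deriv g t d.
Proof.
move=> dl0 H; rewrite /right_deriv.
apply: (cvg_trans _ (cvg_cst d)).
apply: near_eq_cvg.
have h1 := nbhs_right_gt t.
have h2 : \forall y \near t^'+, y < t + dl by apply: nbhs_right_lt; lra.
near=> s.
have hs1 : t < s by near: s.
have hs2 : s < t + dl by near: s.
rewrite (H s); last by rewrite hs1 hs2.
have st : s - t != 0 by rewrite subr_eq0 gt_eqF.
by field.
Unshelve. all: try by end_near.
exact: at_right_proper_filter.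
Qed.

Lemma left_deriv_loc (g : R -> R) (t d dl : R) : 0 < dl ->
  (forall s, t - dl < s < t -> g s = g t + d * (s - t)) -> left_deriv g t d.
Proof.
move=> dl0 H; rewrite /left_deriv.
apply: (cvg_trans _ (cvg_cst d)).
apply: near_eq_cvg.
have h1 := nbhs_left_lt t.
have h2 : \forall y \near t^'-, t - dl < y by apply: nbhs_left_gt; lra.
near=> s.
have hs1 : s < t by near: s.
have hs2 : t - dl < s by near: s.
rewrite (H s); last by rewrite hs1 hs2.
have st : s - t != 0 by rewrite subr_eq0 lt_eqF.
by field.
Unshelve. all: try by end_near.
exact: at_left_proper_filter.
Qed.

Arguments right_deriv_loc {g t d dl}.
Arguments left_deriv_loc {g t d dl}.

Definition nu p := if (p < N)%N then tau p.+1 else tau p + 1.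
Definition sig i p := (gam i (nu p) - gam i (tau p)) / (nu p - tau p).
Definition X i p := gam i (tau p).
Definition w i := sig i N.

Lemma piece i p t : (p <= N)%N -> tau p <= t -> ((p < N)%N -> t <= tau p.+1) ->
  gam i t = X i p + sig i p * (t - tau p).
Proof.
move=> hp ht ht2; rewrite /sig /nu /X.
case: ifP => hpN.
  have hlt := @tau_lt p p.+1 (ltnSn p) hpN.
  apply: (@affine_ab i _ _ (tau_ge0 p) hlt).
  - by move=> c hc; apply: gap.
  - by rewrite ht ht2.
  - by rewrite hlt lexx.
have pN : p = N by apply/eqP; rewrite eqn_leq hp leqNgt hpN.
have hb : tau p < t + 1 by lra.
apply: (@affine_ab i _ _ (tau_ge0 p) hb).
- move=> c hc /andP[h1 _]; by apply: (@gapN c hc); rewrite -pN.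
- rewrite ht /=; lra.
- apply/andP; split; lra.
Qed.

Arguments piece i {p t}.

Lemma X_succ i p : (p < N)%N -> X i p.+1 = X i p + sig i p * (tau p.+1 - tau p).
Proof.
move=> hp; rewrite {1}/X (piece i (t := tau p.+1) (ltnW hp)) //.
exact/ltW/tau_lt.
Qed.

Lemma late i t : tau N <= t -> gam i t = X i N + w i * (t - tau N).
Proof. move=> ht; apply: piece => //; by rewrite ltnn. Qed.

Lemma rderiv_piece i p t : (p <= N)%N -> tau p <= t -> ((p < N)%N -> t < tau p.+1) ->
  right_deriv (gam i) t (sig i p).
Proof.
move=> hp ht ht2.
pose dl := if (p < N)%N then tau p.+1 - t else 1.
have dl0 : 0 < dl by rewrite /dl; case: ifP => h //; have := ht2 h; lra.
apply: (right_deriv_loc dl0) => s /andP[hs1 hs2].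
rewrite (piece i (t := s) hp); last 2 first.
- lra.
- move=> h; move: hs2; rewrite /dl h; lra.
rewrite (piece i (t := t) hp ht); last by move=> h; apply/ltW/ht2.
ring.
Qed.

Lemma lderiv_piece i p : (p < N)%N -> left_deriv (gam i) (tau p.+1) (sig i p).
Proof.
move=> hp.
have hlt := @tau_lt p p.+1 (ltnSn p) hp.
have dl0 : 0 < tau p.+1 - tau p by lra.
apply: (left_deriv_loc dl0) => s /andP[hs1 hs2].
rewrite (piece i (t := s) (ltnW hp)); last 2 first.
- lra.
- move=> _; lra.
rewrite (piece i (t := tau p.+1) (ltnW hp)); last 2 first.
- lra.
- move=> _; lra.
ring.
Qed.

Hypothesis init : forall i, gam i 0 = x i /\ right_deriv (gam i) 0 (v i).
Hypothesis stick : forall i j s, 0 <= s -> gam i s = gam j s ->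
         forall t, s <= t -> gam i t = gam j t.
Hypothesis mom : forall t, 0 < t -> forall i q, gam q t = gam i t ->
         forall (vl : 'I_n.+1 -> R) (vr : R),
           (forall k, gam k t = gam i t -> left_deriv (gam k) t (vl k)) ->
           right_deriv (gam q) t vr ->
           vr = (\sum_(k | gam k t == gam i t) m k * vl k) /
                (\sum_(k | gam k t == gam i t) m k).

Arguments stick {i j s}.

Hypothesis xinc : forall i j : 'I_n.+1, (i < j)%N -> x i < x j.

Lemma X0 i : X i 0 = x i.
Proof. by rewrite /X tau0; case: (init i). Qed.

Lemma sig0 i : sig i 0 = v i.
Proof.
case: (init i) => _ h.
have h2 : right_deriv (gam i) 0 (sig i 0).
  apply: rderiv_piece => //; rewrite ?tau0 // => hN.
  by have := @tau_lt 0 1 isT hN; rewrite tau0.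
exact: (cvg_unique (@Rhausdorff R) h2 h).
Qed.

Lemma sig_mom p q : (p < N)%N ->
  sig q p.+1 = (\sum_(k | X k p.+1 == X q p.+1) m k * sig k p) /
               (\sum_(k | X k p.+1 == X q p.+1) m k).
Proof.
move=> hp.
have t0 : 0 < tau p.+1 by rewrite -tau0; apply: tau_lt.
apply: (@mom (tau p.+1) t0 q q erefl (fun k => sig k p) (sig q p.+1)).
- by move=> k _; apply: lderiv_piece.
- by apply: rderiv_piece => // h; apply: tau_lt.
Qed.

Lemma nocross (k k' : 'I_n.+1) p : (p <= N)%N -> X k p <= X k' p ->
  forall t, tau p <= t -> ((p < N)%N -> t <= tau p.+1) -> gam k t <= gam k' t.
Proof.
move=> hp hX t ht ht2.
rewrite leNgt; apply/negP => hlt.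
have ek := piece k hp ht ht2.
have ek' := piece k' hp ht ht2.
set d0 := X k' p - X k p.
set be := sig k' p - sig k p.
have d00 : 0 <= d0 by rewrite /d0 subr_ge0.
have hneg : d0 + be * (t - tau p) < 0.
  rewrite /d0 /be; move: hlt; rewrite ek ek'; lra.
have be0 : be < 0.
  rewrite ltNge; apply/negP => hb.
  have : 0 <= be * (t - tau p) by apply: mulr_ge0 => //; lra.
  lra.
set e := d0 / (- be).
have nbe : 0 < - be by lra.
have e0 : 0 <= e by apply: divr_ge0 => //; lra.
have et : e < t - tau p.
  rewrite /e ltr_pdivrMr //; nra.
have de : d0 + be * e = 0.
  rewrite /e; have : be != 0 by rewrite lt_eqF. move=> hb; field; rewrite ?oppr_eq0 //.
pose s := tau p + e.
have hs : 0 <= s by have := tau_ge0 p; rewrite /s; lra.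
have eqs : gam k s = gam k' s.
  rewrite (piece k hp (t := s)) ?(piece k' hp (t := s)); last 4 first.
  - rewrite /s; lra.
  - move=> h; have := ht2 h; rewrite /s; lra.
  - rewrite /s; lra.
  - move=> h; have := ht2 h; rewrite /s; lra.
  move: de; rewrite /s /d0 /be; lra.
have ht' : s <= t by rewrite /s; lra.
by move: hlt; rewrite (stick hs eqs t ht') ltxx.
Qed.

Arguments nocross {k k' p}.

Lemma Xorder (k k' : 'I_n.+1) p : (k <= k')%N -> (p <= N)%N -> X k p <= X k' p.
Proof.
rewrite leq_eqVlt => /orP[/eqP/val_inj -> //|kk].
elim: p => [|p IH] hp.
  by rewrite !X0; apply/ltW/xinc.
have hp' : (p <= N)%N by apply: ltnW.
apply: (nocross hp' (IH hp')).
- exact/ltW/tau_lt.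
- by move=> _; rewrite lexx.
Qed.

Arguments Xorder {k k' p}.

Lemma gam_order_late (k k' : 'I_n.+1) t : (k <= k')%N -> tau N <= t -> gam k t <= gam k' t.
Proof.
move=> kk ht; apply: (nocross (leqnn N) (Xorder kk (leqnn N))) => //.
by rewrite ltnn.
Qed.

Arguments gam_order_late {k k' t}.

Lemma w_mono (k k' : 'I_n.+1) : (k <= k')%N -> w k <= w k'.
Proof.
move=> kk; rewrite leNgt; apply/negP => hw.
set D := X k' N - X k N.
have D0 : 0 <= D by rewrite /D subr_ge0; apply: Xorder.
set t := tau N + (D / (w k - w k') + 1).
have hwd : 0 < w k - w k' by lra.
have q0 : 0 <= D / (w k - w k') by apply: divr_ge0 => //; lra.
have ht : tau N <= t by rewrite /t; lra.
have := gam_order_late kk ht; rewrite !late // /t.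
have -> : X k N + w k * (tau N + (D / (w k - w k') + 1) - tau N) =
  X k N + (w k - w k') * (D / (w k - w k')) + w k' * (D / (w k - w k') + 1) + (w k - w k').
  by ring.
rewrite mulrC divfK ?gt_eqF // /D; lra.
Qed.

Lemma X_stickN (k k' : 'I_n.+1) p : (p <= N)%N -> X k p = X k' p -> X k N = X k' N.
Proof.
move=> hp h; rewrite /X; apply: (stick (tau_ge0 p) h); exact: tau_le.
Qed.

Lemma w_eq (k k' : 'I_n.+1) : X k N = X k' N -> w k = w k'.
Proof.
move=> h.
have ht : tau N <= tau N + 1 by lra.
have := stick (tau_ge0 N) h (tau N + 1) ht; rewrite !late // h; lra.
Qed.
Arguments w_mono {k k'}.
Arguments X_stickN {k k' p}.
Arguments w_eq {k k'}.


Lemma pair_sum (I : finType) (Wt : I -> I -> R) (b s : I -> R) :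
  (forall l k, Wt l k = Wt k l) ->
  2 * (\sum_l \sum_k Wt l k * b l * (s k - s l)) =
  \sum_l \sum_k Wt l k * (b l - b k) * (s k - s l).
Proof.
move=> Ws.
set S := \sum_l _.
have S2 : S = \sum_l \sum_k Wt l k * b k * (s l - s k).
  rewrite /S exchange_big; apply: eq_bigr => l _; apply: eq_bigr => k _.
  by rewrite Ws.
have -> : 2 * S = S + S by ring.
rewrite {2}S2 /S -big_split; apply: eq_bigr => l _.
rewrite -big_split; apply: eq_bigr => k _ /=; ring.
Qed.

Lemma sum_lt0 (I : finType) (F : I -> R) a :
  (forall i, F i <= 0) -> F a < 0 -> \sum_i F i < 0.
Proof.
move=> H Ha; rewrite (bigD1 a) //=.
have : \sum_(i | i != a) F i <= 0 by apply: sumr_le0 => i _.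
lra.
Qed.

Lemma sum_gt0 (I : finType) (F : I -> R) a :
  (forall i, 0 <= F i) -> 0 < F a -> 0 < \sum_i F i.
Proof.
move=> H Ha; rewrite (bigD1 a) //=.
have : 0 <= \sum_(i | i != a) F i by apply: sumr_ge0 => i _.
lra.
Qed.

Hypothesis mpos : forall i, 0 < m i.

Definition ind c (i : 'I_n.+1) : R := ((i < c)%N)%:R.
Definition P c p := \sum_i ind c i * (m i * sig i p).

Lemma grp_mono p (a b : 'I_n.+1) : (p < N)%N -> (a < b)%N -> X a p.+1 = X b p.+1 ->
  sig b p <= sig a p /\ (X a p != X b p -> sig b p < sig a p).
Proof.
move=> hp ab e.
have hX : X a p <= X b p by apply: Xorder => //; [exact: ltnW | exact: ltnW].
have D : 0 < tau p.+1 - tau p by have := @tau_lt p p.+1 (ltnSn p) hp; lra.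
move: e; rewrite !X_succ // => e.
have E : (sig a p - sig b p) * (tau p.+1 - tau p) = X b p - X a p by lra.
split.
  have : 0 <= (sig a p - sig b p) * (tau p.+1 - tau p) by rewrite E; lra.
  rewrite pmulr_lge0 //; lra.
move=> ne.
have : 0 < (sig a p - sig b p) * (tau p.+1 - tau p).
  by rewrite E subr_gt0 lt_neqAle ne hX.
rewrite pmulr_lgt0 //; lra.
Qed.

Arguments grp_mono {p a b}.

Section Drop.
Variable p : nat.
Hypothesis hp : (p < N)%N.

Definition Ms (l : 'I_n.+1) := \sum_(k | X k p.+1 == X l p.+1) m k.
Definition Wt (l k : 'I_n.+1) : R :=
  if X k p.+1 == X l p.+1 then m l * m k / Ms l else 0.

Lemma Ms_gt0 l : 0 < Ms l.
Proof.
rewrite /Ms (bigD1 l) //=.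
have : 0 <= \sum_(i | (X i p.+1 == X l p.+1) && (i != l)) m i.
  by apply: sumr_ge0 => i _; apply/ltW.
have := mpos l; lra.
Qed.

Lemma Wt_sym l k : Wt l k = Wt k l.
Proof.
rewrite /Wt eq_sym; case: eqP => // e.
have -> : Ms l = Ms k.
  by rewrite /Ms; apply: eq_bigl => j; rewrite e.
by rewrite [m l * _]mulrC.
Qed.

Lemma Wt_ge0 l k : 0 <= Wt l k.
Proof.
rewrite /Wt; case: ifP => // _.
apply: divr_ge0; last exact/ltW/Ms_gt0.
by apply: mulr_ge0; apply/ltW.
Qed.

Lemma Wt_sum l : \sum_k Wt l k = m l.
Proof.
rewrite /Wt -big_mkcond /=.
have -> : \sum_(k | X k p.+1 == X l p.+1) m l * m k / Ms l =
          m l / Ms l * Ms l.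
  rewrite /Ms mulr_sumr; apply: eq_bigr => k _; rewrite mulrAC mulrC; ring.
by rewrite divfK // gt_eqF // Ms_gt0.
Qed.

Lemma Wt_mom l : m l * sig l p.+1 = \sum_k Wt l k * sig k p.
Proof.
rewrite sig_mom // /Wt.
have -> : \sum_k (if X k p.+1 == X l p.+1 then m l * m k / Ms l else 0) * sig k p =
  \sum_(k | X k p.+1 == X l p.+1) m l / Ms l * (m k * sig k p).
  rewrite [RHS]big_mkcond /=; apply: eq_bigr => k _; case: ifP => _; last by rewrite mul0r.
  ring.
by rewrite -mulr_sumr /Ms mulrA mulrAC.
Qed.

Lemma P_diff c : 2 * (P c p.+1 - P c p) =
  \sum_l \sum_k Wt l k * (ind c l - ind c k) * (sig k p - sig l p).
Proof.
rewrite -pair_sum; last exact: Wt_sym.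
congr (2 * _).
rewrite /P -sumrB; apply: eq_bigr => l _.
rewrite Wt_mom.
have -> : m l * sig l p = \sum_k Wt l k * sig l p by rewrite -mulr_suml Wt_sum.
rewrite !mulr_sumr -sumrB; apply: eq_bigr => k _; ring.
Qed.

Lemma term_le0 c l k : Wt l k * (ind c l - ind c k) * (sig k p - sig l p) <= 0.
Proof.
rewrite /Wt; case: ifP => e; last by rewrite !mul0r.
move/eqP: e => e.
rewrite /ind.
case hl: (l < c)%N; case hk: (k < c)%N; rewrite ?subrr ?mulr0 ?mul0r //.
- have lk : (l < k)%N by apply: (leq_trans hl); rewrite leqNgt hk.
  have [h _] := grp_mono hp lk (esym e).
  have W0 : 0 <= m l * m k / Ms l by apply: divr_ge0; [apply: mulr_ge0; apply/ltW | exact/ltW/Ms_gt0].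
  rewrite subr0 mulr1; apply: mulr_ge0_le0 => //; lra.
- have kl : (k < l)%N by apply: (leq_trans hk); rewrite leqNgt hl.
  have [h _] := grp_mono hp kl e.
  have W0 : 0 <= m l * m k / Ms l by apply: divr_ge0; [apply: mulr_ge0; apply/ltW | exact/ltW/Ms_gt0].
  rewrite sub0r mulrN1; rewrite mulNr; rewrite -mulrN; apply: mulr_ge0_le0 => //; lra.
Qed.

Lemma P_drop_le c : P c p.+1 <= P c p.
Proof.
have : 2 * (P c p.+1 - P c p) <= 0.
  rewrite P_diff; apply: sumr_le0 => l _; apply: sumr_le0 => k _; exact: term_le0.
lra.
Qed.

Lemma P_drop_eq c : (forall k l : 'I_n.+1, X k p.+1 = X l p.+1 -> (k < c)%N = (l < c)%N) ->
  P c p.+1 = P c p.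
Proof.
move=> H.
have : 2 * (P c p.+1 - P c p) = 0.
  rewrite P_diff; apply: big1 => l _; apply: big1 => k _.
  rewrite /Wt; case: ifP => e; last by rewrite !mul0r.
  by rewrite /ind (H l k (esym (eqP e))) subrr mulr0 mul0r.
lra.
Qed.

Lemma P_drop_lt c (a b : 'I_n.+1) : (a < c)%N -> (c <= b)%N ->
  X a p.+1 = X b p.+1 -> X a p != X b p -> P c p.+1 < P c p.
Proof.
move=> ac cb e ne.
have ab : (a < b)%N by apply: leq_trans cb.
have : 2 * (P c p.+1 - P c p) < 0.
  rewrite P_diff; apply: (@sum_lt0 _ _ a).
    by move=> l; apply: sumr_le0 => k _; exact: term_le0.
  apply: (@sum_lt0 _ _ b); first by move=> k; exact: term_le0.
  have [_ h] := grp_mono hp ab e.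
  have h2 := h ne.
  rewrite /Wt e eqxx /ind ac.
  have -> : ((b < c)%N) = false by apply/negbTE; rewrite -leqNgt.
  have W0 : 0 < m a * m b / Ms a.
    by apply: divr_gt0; [apply: mulr_gt0 | exact: Ms_gt0]; exact: mpos.
  rewrite subr0 mulr1 pmulr_rlt0 //; lra.
lra.
Qed.

End Drop.

Arguments P_drop_le {p} hp c.
Arguments P_drop_eq {p} hp c.
Arguments P_drop_lt {p} hp c {a b}.

Definition phi c := \sum_i ind c i * (m i * (v i - w i)).

Lemma phi_tele c : phi c = \sum_(p < N) (P c p - P c p.+1).
Proof.
have -> : phi c = P c 0 - P c N.
  rewrite /phi /P -sumrB; apply: eq_bigr => i _; rewrite sig0 /w; ring.
rewrite -(big_mkord xpredT (fun p => P c p - P c p.+1)).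
have := telescope_sumr (fun p => P c p) (leq0n N).
move=> h; rewrite -[LHS]opprB -h -sumrN; apply: eq_bigr => q _; ring.
Qed.

Lemma phi_ge0 c : 0 <= phi c.
Proof.
rewrite phi_tele; apply: sumr_ge0 => q _.
have := P_drop_le (ltn_ord q) c; lra.
Qed.

Lemma switch (a b : 'I_n.+1) (ab : (a < b)%N) q : (q <= N)%N -> X a q = X b q ->
  exists2 p, (p < q)%N & X a p != X b p /\ X a p.+1 = X b p.+1.
Proof.
elim: q => [|q IH] hq e.
  by move: e; rewrite !X0 => e; have := @xinc a b ab; rewrite e ltxx.
case: (eqVneq (X a q) (X b q)) => e'.
  have [p pq H] := IH (ltnW hq) e'; exists p => //; exact: ltnW.
by exists q.
Qed.

Definition Zc c := (c == 0)%N || (c == n.+1)%N || (X (inord c.-1) N != X (inord c) N).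

Lemma phi_cut c : (c <= n.+1)%N -> Zc c -> phi c = 0.
Proof.
move=> cn; rewrite /Zc.
case: (eqVneq c 0%N) => [-> _|c0] /=.
  by rewrite /phi; apply: big1 => i _; rewrite /ind ltn0 mul0r.
rewrite phi_tele.
case: (eqVneq c n.+1) => [-> _|cn1] /=.
  apply: big1 => q _; rewrite P_drop_eq //; last by move=> k l _; rewrite !ltn_ord.
  by rewrite subrr.
move=> ne.
have cn' : (c < n.+1)%N by rewrite ltn_neqAle cn1 cn.
have va : nat_of_ord (inord c.-1 : 'I_n.+1) = c.-1 by rewrite inordK // (leq_ltn_trans (leq_pred c)).
have vb : nat_of_ord (inord c : 'I_n.+1) = c by rewrite inordK.
move: ne va vb; set a : 'I_n.+1 := inord c.-1; set b : 'I_n.+1 := inord c => ne va vb.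
apply: big1 => q _; rewrite P_drop_eq ?subrr //.
move=> k l e.
apply/idP/idP => h1; rewrite ltnNge; apply/negP => h2.
- have o1 : X k q.+1 <= X a q.+1 by apply: Xorder (ltn_ord q); rewrite va -ltnS prednK ?lt0n.
  have o2 : X a q.+1 <= X b q.+1 by apply: Xorder (ltn_ord q); rewrite va vb leq_pred.
  have o3 : X b q.+1 <= X l q.+1 by apply: Xorder (ltn_ord q); rewrite vb.
  have eab : X a q.+1 = X b q.+1 by apply/eqP; rewrite eq_le o2 /=; rewrite e in o1; apply: le_trans o3 o1.
  by move/negP: ne; apply; apply/eqP; apply: (X_stickN (ltn_ord q) eab).
- have o1 : X l q.+1 <= X a q.+1 by apply: Xorder (ltn_ord q); rewrite va -ltnS prednK ?lt0n.
  have o2 : X a q.+1 <= X b q.+1 by apply: Xorder (ltn_ord q); rewrite va vb leq_pred.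
  have o3 : X b q.+1 <= X k q.+1 by apply: Xorder (ltn_ord q); rewrite vb.
  have eab : X a q.+1 = X b q.+1 by apply/eqP; rewrite eq_le o2 /=; rewrite -e in o1; apply: le_trans o3 o1.
  by move/negP: ne; apply; apply/eqP; apply: (X_stickN (ltn_ord q) eab).
Qed.

Lemma phi_pos c : (c <= n.+1)%N -> ~~ Zc c -> 0 < phi c.
Proof.
move=> cn; rewrite /Zc !negb_or negbK => /andP[/andP[c0 cn1] /eqP e].
have cn' : (c < n.+1)%N by rewrite ltn_neqAle cn1 cn.
have va : nat_of_ord (inord c.-1 : 'I_n.+1) = c.-1 by rewrite inordK // (leq_ltn_trans (leq_pred c)).
have vb : nat_of_ord (inord c : 'I_n.+1) = c by rewrite inordK.
move: e va vb; set a : 'I_n.+1 := inord c.-1; set b : 'I_n.+1 := inord c => e va vb.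
have ac : (a < c)%N by rewrite va prednK // lt0n.
have ab : (a < b)%N by rewrite vb.
have [p pN [ne e']] := @switch a b ab N (leqnn N) e.
rewrite phi_tele; apply: (@sum_gt0 _ _ (Ordinal pN)).
  by move=> q; have := P_drop_le (ltn_ord q) c; lra.
have := P_drop_lt pN c ac (eq_leq (esym vb)) e' ne; rewrite /=; lra.
Qed.

Lemma Msum_ind c : Msum m c = \sum_i ind c i * m i.
Proof.
rewrite /Msum big_mkcond; apply: eq_bigr => i _ /=; rewrite /ind.
by case: ifP => _; rewrite ?mul1r ?mul0r.
Qed.

Lemma Qsum_ind c : Qsum m v c = \sum_i ind c i * (m i * v i).
Proof.
rewrite /Qsum big_mkcond; apply: eq_bigr => i _ /=; rewrite /ind.
by case: ifP => _; rewrite ?mul1r ?mul0r.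
Qed.

Definition Wc c := \sum_i ind c i * (m i * w i).

Lemma phi_QW c : phi c = Qsum m v c - Wc c.
Proof. by rewrite Qsum_ind /phi /Wc -sumrB; apply: eq_bigr => i _; ring. Qed.

Lemma ind_ge0 c i : 0 <= ind c i.
Proof. by rewrite /ind ler0n. Qed.

Lemma Msum_S (k : 'I_n.+1) : Msum m k.+1 = Msum m k + m k.
Proof.
rewrite /Msum (bigD1 k) //= addrC; congr (_ + _).
apply: eq_bigl => i; rewrite ltnS leq_eqVlt val_eqE andb_orl andbN orFb.
by apply: andb_idr => h; rewrite -val_eqE neq_ltn h.
Qed.

Lemma Qsum_S (k : 'I_n.+1) : Qsum m v k.+1 = Qsum m v k + m k * v k.
Proof.
rewrite /Qsum (bigD1 k) //= addrC; congr (_ + _).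
apply: eq_bigl => i; rewrite ltnS leq_eqVlt val_eqE andb_orl andbN orFb.
by apply: andb_idr => h; rewrite -val_eqE neq_ltn h.
Qed.

Lemma Msum0 : Msum m 0 = 0.
Proof. by rewrite /Msum big_pred0. Qed.

Lemma Qsum0 : Qsum m v 0 = 0.
Proof. by rewrite /Qsum big_pred0. Qed.

Lemma Msum_le a b : (a <= b)%N -> Msum m a <= Msum m b.
Proof.
move=> ab; rewrite !Msum_ind -subr_ge0 -sumrB; apply: sumr_ge0 => i _.
rewrite -mulrBl; apply: mulr_ge0; last exact/ltW.
rewrite /ind subr_ge0 ler_nat; case: (i < a)%N / idP => //= h.
by rewrite (leq_trans h ab).
Qed.
Arguments Msum_le {a b}.

Lemma Msum_ge0 a : 0 <= Msum m a.
Proof. by rewrite -Msum0; apply: Msum_le. Qed.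

Lemma Msum_lt a b : (a < b)%N -> (a < n.+1)%N -> Msum m a < Msum m b.
Proof.
move=> ab an.
have := Msum_S (Ordinal an); rewrite /= => e.
have := Msum_le ab; rewrite e; have := mpos (Ordinal an); lra.
Qed.
Arguments Msum_lt {a b}.

Lemma w_block a b : (a < b)%N -> (b <= n.+1)%N ->
  (forall c, (a < c < b)%N -> ~~ Zc c) ->
  forall i : 'I_n.+1, (a <= i < b)%N -> w i = w (inord a).
Proof.
move=> ab bn H.
have an : (a < n.+1)%N by apply: leq_trans bn.
suff S : forall d, (a + d < b)%N -> w (inord (a + d)) = w (inord a).
  move=> i /andP[ai ib]; have := S (i - a)%N; rewrite subnKC // inord_val; apply; by [].
elim=> [|d IH] h; first by rewrite addn0.
rewrite -IH; last by apply: (ltn_trans _ h); rewrite addnS.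
have hc : (a < a + d.+1 < b)%N by rewrite h andbT addnS ltnS leq_addr.
have := H _ hc; rewrite /Zc.
rewrite !negb_or negbK => /andP[_ /eqP e].
by rewrite addnS /= in e; rewrite (w_eq e) addnS.
Qed.
Arguments w_block {a b}.

Lemma Wlin a c b u : (a <= c)%N -> (c <= b)%N ->
  (forall i : 'I_n.+1, (a <= i < b)%N -> w i = u) ->
  Wc c - Wc a = u * (Msum m c - Msum m a).
Proof.
move=> ac cb H; rewrite /Wc !Msum_ind -!sumrB mulr_sumr; apply: eq_bigr => i _.
rewrite /ind; case: (ltnP i c) => hic; case: (ltnP i a) => hia /=; rewrite ?subrr ?mulr0 //.
- by rewrite H ?hia ?(leq_trans hic cb) //; ring.
- by have := leq_trans ac hic; rewrite leqNgt hia.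
Qed.
Arguments Wlin {a c b u}.

Arguments phi_cut {c}.
Arguments phi_pos {c}.

Variable f : R -> R.
Hypothesis hf : forall (k : 'I_n.+1) (y : R), Msum m k <= y <= Msum m k.+1 ->
      f y = Qsum m v k + v k * (y - Msum m k).

Definition Mt := Msum m n.+1.

Lemma f_at c : (c <= n.+1)%N -> f (Msum m c) = Qsum m v c.
Proof.
rewrite leq_eqVlt => /orP[/eqP ->|h].
  have := hf ord_max (Msum m n.+1).
  rewrite /= (Msum_S ord_max) (Qsum_S ord_max) => ->; last by have := mpos ord_max; lra.
  ring.
have := hf (Ordinal h) (Msum m c); rewrite /= => ->; first ring.
by rewrite lexx /=; apply: Msum_le.
Qed.

Lemma locate y : 0 <= y -> y <= Mt -> exists k : 'I_n.+1, Msum m k <= y <= Msum m k.+1.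
Proof.
move=> y0 yM.
suff S : forall c, (c < n.+1)%N -> y <= Msum m c.+1 ->
    exists k : 'I_n.+1, Msum m k <= y <= Msum m k.+1.
  exact: (S n (ltnSn n) yM).
elim=> [|c IH] hc hy.
  by exists ord0; rewrite /= Msum0 y0 hy.
case: (lerP y (Msum m c.+1)) => h; first by apply: IH => //; apply: ltnW.
by exists (Ordinal hc); rewrite /= hy (ltW h).
Qed.

Lemma line_le_f c s : (forall k, (k <= n.+1)%N -> Qsum m v c + s * (Msum m k - Msum m c) <= Qsum m v k) ->
  forall y, 0 <= y <= Mt -> Qsum m v c + s * (y - Msum m c) <= f y.
Proof.
move=> H y /andP[y0 yM].
have [k /andP[k1 k2]] := @locate y y0 yM.
rewrite (hf k y); last by rewrite k1 k2.
have A := H k (ltnW (ltn_ord k)).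
have B := H k.+1 (ltn_ord k).
rewrite Msum_S Qsum_S in B k2.
have mk := mpos k.
case: (lerP s (v k)) => hs.
  have : (s - v k) * (y - Msum m k) <= 0 by apply: mulr_le0_ge0; lra.
  nra.
have : (s - v k) * (y - Msum m k) <= (s - v k) * m k by rewrite ler_pM2l; lra.
nra.
Qed.

Definition Gset := [set g : R -> R | convex_on 0 Mt g /\ (forall z, 0 <= z <= Mt -> g z <= f z)].

Lemma r_def y : conv_env 0 Mt f y = sup [set g y | g in Gset].
Proof. by []. Qed.

Lemma line_in c s : (forall k, (k <= n.+1)%N -> Qsum m v c + s * (Msum m k - Msum m c) <= Qsum m v k) ->
  Gset (fun y => Qsum m v c + s * (y - Msum m c)).
Proof.
move=> H; split; last exact: line_le_f.
move=> y z l _ _ _ /=; rewrite le_eqVlt; apply/orP; left; apply/eqP; ring.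
Qed.
Arguments line_in {c s}.

Lemma Mt_range c : (c <= n.+1)%N -> 0 <= Msum m c <= Mt.
Proof. by move=> h; rewrite Msum_ge0 /=; apply: Msum_le. Qed.
Arguments Mt_range {c}.

Lemma r_upper c : (c <= n.+1)%N -> has_ubound [set g (Msum m c) | g in Gset].
Proof.
move=> hc; exists (Qsum m v c) => z [g [_ Hg] <-].
by rewrite -f_at //; apply: Hg; apply: Mt_range.
Qed.
Arguments r_upper {c}.

Lemma Zsupport c : (c <= n.+1)%N -> Zc c ->
  forall k, (k <= n.+1)%N -> Qsum m v c + w (inord c.-1) * (Msum m k - Msum m c) <= Qsum m v k.
Proof.
move=> hc Zcc k hk.
set s := w (inord c.-1).
have pc := phi_cut hc Zcc.
have pk := phi_ge0 k.
have vc : nat_of_ord (inord c.-1 : 'I_n.+1) = c.-1 by rewrite inordK //; case: (c) hc.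
have E : Qsum m v k - Qsum m v c - s * (Msum m k - Msum m c) =
   phi k - phi c + \sum_i (ind k i - ind c i) * (m i * (w i - s)).
  rewrite !phi_QW /Wc !Qsum_ind !Msum_ind.
  rewrite -!sumrB mulr_sumr -sumrB -big_split /=; apply: eq_bigr => i _; ring.
have S : 0 <= \sum_i (ind k i - ind c i) * (m i * (w i - s)).
  apply: sumr_ge0 => i _; rewrite /ind.
  case: (ltnP i k) => hik; case: (ltnP i c) => hic /=; rewrite ?subrr ?mul0r //.
  - rewrite subr0 mul1r; apply: mulr_ge0; first exact/ltW.
    rewrite subr_ge0; apply: w_mono; rewrite vc; exact: leq_trans (leq_pred c) hic.
  - rewrite sub0r mulN1r oppr_ge0; apply: mulr_ge0_le0; first exact/ltW.
    rewrite subr_le0; apply: w_mono; rewrite vc -ltnS; by case: (c) hic.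
lra.
Qed.
Arguments Zsupport {c}.

Lemma r_Z c : (c <= n.+1)%N -> Zc c -> conv_env 0 Mt f (Msum m c) = Qsum m v c.
Proof.
move=> hc Zcc; rewrite r_def.
have G := line_in (Zsupport hc Zcc).
apply/eqP; rewrite eq_le; apply/andP; split.
  apply: ge_sup.
    exists ((fun y => Qsum m v c + w (inord c.-1) * (y - Msum m c)) (Msum m c)).
    by exists (fun y => Qsum m v c + w (inord c.-1) * (y - Msum m c)).
  move=> z [g [_ Hg] <-]; by rewrite -f_at //; apply: Hg; apply: Mt_range.
have U := ub_le_sup (r_upper hc).
have hmem : [set g (Msum m c) | g in Gset] (Qsum m v c).
  exists (fun y => Qsum m v c + w (inord c.-1) * (y - Msum m c)); first exact: G.
  by rewrite subrr mulr0 addr0.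
exact: U _ hmem.
Qed.

Lemma Z0c : Zc 0. Proof. by rewrite /Zc eqxx. Qed.
Lemma Znc : Zc n.+1. Proof. by rewrite /Zc eqxx orbT. Qed.

Lemma r_nZ c : (c <= n.+1)%N -> ~~ Zc c -> conv_env 0 Mt f (Msum m c) < Qsum m v c.
Proof.
move=> hc nZ.
have c0 : c != 0%N by apply: contraNneq nZ => ->; exact: Z0c.
have cn : (c < n.+1)%N by rewrite ltn_neqAle hc andbT; apply: contraNneq nZ => ->; exact: Znc.
have [j0 [hj /andP[h1 h2]]] := @kk_find Zc n.+1 Z0c Znc c cn.
have [ab Za Zb bn btw] := @kk_block Zc n.+1 Z0c j0 hj.
set a := kk Zc n.+1 j0.-1 in h1 ab Za btw.
set b := kk Zc n.+1 j0 in h2 ab Zb bn btw.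
have ac : (a < c)%N by rewrite ltn_neqAle h1 andbT; apply: contraNneq nZ => <-.
set u := w (inord a).
have wb := w_block ab bn btw.
have Wca := Wlin (ltnW ac) (ltnW h2) wb.
have Wba := Wlin (ltnW ab) (leqnn b) wb.
have pa := phi_cut (leq_trans (ltnW ab) bn) Za.
have pb := phi_cut bn Zb.
have pc := phi_pos hc nZ.
rewrite !phi_QW in pa pb pc.
have Mab : Msum m a < Msum m b by apply: Msum_lt => //; exact: leq_trans ab bn.
have Mac : Msum m a < Msum m c by apply: Msum_lt => //; exact: ltn_trans ac cn.
have Mcb : Msum m c < Msum m b by apply: Msum_lt.
suff : conv_env 0 Mt f (Msum m c) <= Wc c by lra.
rewrite r_def; apply: ge_sup.
  exists ((fun y => Qsum m v 0 + w (inord 0%N) * (y - Msum m 0)) (Msum m c)).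
  exists (fun y => Qsum m v 0 + w (inord 0%N) * (y - Msum m 0)) => //.
  exact: line_in (Zsupport (leq0n _) Z0c).
move=> z [g [Hc Hg] <-].
set l := (Msum m b - Msum m c) / (Msum m b - Msum m a).
have l0 : 0 <= l <= 1.
  rewrite /l; apply/andP; split; first by apply: divr_ge0; lra.
  by rewrite ler_pdivrMr ?mul1r; lra.
have Ml : Msum m c = l * Msum m a + (1 - l) * Msum m b.
  rewrite /l; field; lra.
have ha := Hg (Msum m a) (Mt_range (leq_trans (ltnW ab) bn)).
have hb := Hg (Msum m b) (Mt_range bn).
rewrite f_at ?(leq_trans (ltnW ab) bn) // in ha.
rewrite f_at // in hb.
have := Hc (Msum m a) (Msum m b) l (Mt_range (leq_trans (ltnW ab) bn)) (Mt_range bn) l0.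
rewrite -Ml => hcv.
have : g (Msum m c) <= l * Qsum m v a + (1 - l) * Qsum m v b.
  apply: (le_trans hcv); move/andP: l0 => [l0 l1].
  by apply: lerD; apply: ler_wpM2l => //; lra.
have -> : l * Qsum m v a + (1 - l) * Qsum m v b = Wc c.
  have -> : Qsum m v a = Wc a by lra.
  have -> : Qsum m v b = Wc a + w (inord a) * (Msum m b - Msum m a) by lra.
  have -> : Wc c = Wc a + w (inord a) * (Msum m c - Msum m a) by lra.
  rewrite /l; field; lra.
by [].
Qed.

Lemma Kr : [seq k <- iota 0 n.+2 | conv_env 0 Mt f (Msum m k) == Qsum m v k] = KK Zc n.+1.
Proof.
apply: eq_in_filter => k; rewrite mem_iota add0n ltnS => /andP[_ hk].
case: (boolP (Zc k)) => Z.
  by rewrite r_Z // eqxx.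
by rewrite lt_eqF // r_nZ.
Qed.

Lemma sc_of_X (i j : 'I_n.+1) : X i N = X j N -> same_cluster gam i j.
Proof.
move=> e; rewrite /same_cluster.
apply: (cvg_trans _ (cvg_cst (0:R))).
apply: near_eq_cvg.
have hN : \forall t \near +oo, tau N <= t by apply: nbhs_pinfty_ge; exact: num_real.
near=> t.
have ht : tau N <= t by near: t.
by rewrite (stick (tau_ge0 N) e t ht) subrr normr0.
Unshelve. all: try by end_near.
exact: proper_pinfty_nbhs.
Qed.

Lemma X_of_sc_le (i j : 'I_n.+1) : (i <= j)%N -> same_cluster gam i j -> X i N = X j N.
Proof.
move=> ij H.
apply/eqP; rewrite eq_le (Xorder ij (leqnn N)) /=.
rewrite leNgt; apply/negP => hlt.
set al := X j N - X i N.
have al0 : 0 < al by rewrite /al subr_gt0.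
have H2 : \forall t \near +oo, `| 0 - `| gam i t - gam j t | | < al.
  by apply: (cvgr_dist_lt _ _ H _ al0).
have [t ht Ht] := pinfty_ex_ge (num_real (tau N)) H2.
move: Ht; rewrite sub0r normrN normr_id distrC ger0_norm; last first.
  by rewrite subr_ge0; apply: gam_order_late.
rewrite !late //.
have := w_mono ij.
have : 0 <= t - tau N by lra.
rewrite /al; nra.
Qed.

Lemma X_of_sc (i j : 'I_n.+1) : same_cluster gam i j -> X i N = X j N.
Proof.
case: (leqP i j) => ij; first exact: X_of_sc_le.
move=> H; apply/esym; apply: X_of_sc_le; first exact: ltnW.
move: H; rewrite /same_cluster.
by under eq_fun do rewrite distrC.
Qed.

Lemma X_noZ (i j : 'I_n.+1) : (i <= j)%N ->
  X i N = X j N <-> (forall c, (i < c <= j)%N -> ~~ Zc c).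
Proof.
move=> ij; split.
  move=> e c /andP[ic cj].
  have c0 : c != 0%N by rewrite -lt0n (leq_ltn_trans (leq0n i) ic).
  have cn : (c < n.+1)%N by apply: leq_ltn_trans cj _.
  have va : nat_of_ord (inord c.-1 : 'I_n.+1) = c.-1 by rewrite inordK // (leq_ltn_trans (leq_pred c)).
  have vb : nat_of_ord (inord c : 'I_n.+1) = c by rewrite inordK.
  rewrite /Zc negb_or negb_or c0 ltn_eqF //= negbK.
  have o1 : X i N <= X (inord c.-1) N by apply: Xorder => //; rewrite va -ltnS prednK ?lt0n.
  have o2 : X (inord c.-1) N <= X (inord c) N by apply: Xorder => //; rewrite va vb leq_pred.
  have o3 : X (inord c) N <= X j N by apply: Xorder => //; rewrite vb.
  rewrite -e in o3.
  by apply/eqP; apply/le_anti; rewrite o2 /=; apply: le_trans o3 o1.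
move=> H.
suff S : forall d, (i + d <= j)%N -> X i N = X (inord (i + d)) N.
  by have := S (j - i)%N; rewrite subnKC // inord_val; apply.
elim=> [|d IH] h; first by rewrite addn0 inord_val.
rewrite IH; last by apply: leq_trans h; rewrite addnS.
have hc : (i < i + d.+1 <= j)%N by rewrite h andbT addnS ltnS leq_addr.
have := H _ hc; rewrite /Zc !negb_or negbK => /andP[_ /eqP e].
by rewrite addnS /= in e; rewrite e addnS.
Qed.

Arguments X_noZ {i j}.

Lemma block_both (i j : 'I_n.+1) : (i <= j)%N -> (forall c, (i < c <= j)%N -> ~~ Zc c) ->
  exists j0, [/\ (0 < j0 <= ll Zc n.+1)%N, (kk Zc n.+1 j0.-1 <= i < kk Zc n.+1 j0)%N
            & (kk Zc n.+1 j0.-1 <= j < kk Zc n.+1 j0)%N].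
Proof.
move=> ij H.
have [j0 [hj /andP[h1 h2]]] := @kk_find Zc n.+1 Z0c Znc i (ltn_ord i).
have [_ _ Zb _ _] := @kk_block Zc n.+1 Z0c j0 hj.
exists j0; split => //; first by rewrite h1 h2.
rewrite (leq_trans h1 ij) /= ltnNge; apply/negP => bj.
by have := H (kk Zc n.+1 j0); rewrite h2 bj Zb => /(_ isT).
Qed.

Lemma in_block_noZ j0 (i j : 'I_n.+1) : (0 < j0 <= ll Zc n.+1)%N ->
  (kk Zc n.+1 j0.-1 <= i < kk Zc n.+1 j0)%N -> (kk Zc n.+1 j0.-1 <= j < kk Zc n.+1 j0)%N ->
  (i <= j)%N -> forall c, (i < c <= j)%N -> ~~ Zc c.
Proof.
move=> hj /andP[a1 a2] /andP[b1 b2] ij c /andP[ic cj].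
have [_ _ _ _ btw] := @kk_block Zc n.+1 Z0c j0 hj.
apply: btw; rewrite (leq_ltn_trans a1 ic) /=; exact: leq_ltn_trans cj b2.
Qed.

Arguments block_both {i j}.
Arguments in_block_noZ {j0 i j}.

Lemma main_sec :
 [/\ kk Zc n.+1 0 = 0%N, kk Zc n.+1 (ll Zc n.+1) = n.+1,
   (forall i j : 'I_n.+1, same_cluster gam i j <->
      exists j0, [/\ (0 < j0 <= ll Zc n.+1)%N, (kk Zc n.+1 j0.-1 <= i < kk Zc n.+1 j0)%N
            & (kk Zc n.+1 j0.-1 <= j < kk Zc n.+1 j0)%N]) &
   (forall j0, (0 < j0 <= ll Zc n.+1)%N -> forall i : 'I_n.+1,
      (kk Zc n.+1 j0.-1 <= i < kk Zc n.+1 j0)%N ->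
      exists T0 : R, forall t, T0 <= t -> right_deriv (gam i) t
        ((Qsum m v (kk Zc n.+1 j0) - Qsum m v (kk Zc n.+1 j0.-1)) /
         (Msum m (kk Zc n.+1 j0) - Msum m (kk Zc n.+1 j0.-1))))].
Proof.
split.
- exact: kk0 Z0c.
- exact: kkl Znc.
- move=> i j; split.
    move/X_of_sc => e.
    case: (leqP i j) => ij.
      by apply: block_both => //; apply/X_noZ.
    have [j0 [A B C]] := @block_both j i (ltnW ij) (proj1 (X_noZ (ltnW ij)) (esym e)).
    by exists j0.
  move=> [j0 [hj hi hj']].
  apply: sc_of_X.
  case: (leqP i j) => ij.
    by apply/(X_noZ ij); apply: (in_block_noZ hj).
  by apply/esym/(X_noZ (ltnW ij)); apply: (in_block_noZ hj) => //; exact: ltnW.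
- move=> j0 hj i hi.
  have [ab Za Zb bn btw] := @kk_block Zc n.+1 Z0c j0 hj.
  set a := kk Zc n.+1 j0.-1 in hi ab Za btw *.
  set b := kk Zc n.+1 j0 in hi ab Zb bn btw *.
  have wb := w_block ab bn btw.
  have Wba := Wlin (ltnW ab) (leqnn b) wb.
  have pa := phi_cut (leq_trans (ltnW ab) bn) Za.
  have pb := phi_cut bn Zb.
  rewrite !phi_QW in pa pb.
  have Mab : Msum m a < Msum m b by apply: Msum_lt => //; exact: leq_trans ab bn.
  have -> : (Qsum m v b - Qsum m v a) / (Msum m b - Msum m a) = w i.
    rewrite (wb i hi).
    have -> : Qsum m v b - Qsum m v a = w (inord a) * (Msum m b - Msum m a) by lra.
    by rewrite mulfK // subr_eq0 gt_eqF.
  exists (tau N) => t ht.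
  by apply: rderiv_piece => //; rewrite ltnn.
Qed.

Lemma final_sec :
  let r := conv_env 0 (Msum m n.+1) f in
  let K := [seq k <- iota 0 n.+2 | r (Msum m k) == Qsum m v k] in
  let l := (size K).-1 in
  let kk := fun j => nth 0%N K j in
  let inT := fun (i : 'I_n.+1) j => (kk j.-1 <= i < kk j)%N in
  let slope := fun j => (Qsum m v (kk j) - Qsum m v (kk j.-1)) /
                        (Msum m (kk j) - Msum m (kk j.-1)) in
  [/\ kk 0%N = 0%N, kk l = n.+1,
      (forall i j : 'I_n.+1, same_cluster gam i j <->
          exists j0, [/\ (0 < j0 <= l)%N, inT i j0 & inT j j0]) &
      (forall j0, (0 < j0 <= l)%N -> forall i : 'I_n.+1, inT i j0 ->
          exists T0 : R, forall t, T0 <= t -> right_deriv (gam i) t (slope j0))].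
Proof.
move=> r K l kkf inT slope.
have eK : K = KK Zc n.+1 by exact: Kr.
rewrite /inT /slope /kkf /l eK.
exact: main_sec.
Qed.
End Grid.

Theorem theorem2p1 (R : realType) (n : nat) (m x v : 'I_n -> R)
  (gam : 'I_n -> R -> R) (f : R -> R) :
  (0 < n)%N ->
  (forall i, 0 < m i) ->
  (forall i j : 'I_n, (i < j)%N -> x i < x j) ->
  sticky_trajectories m x v gam ->
  (* f: graph is the union of the segments [P_k, P_(k+1)] (0-based k) *)
  (forall (k : 'I_n) (y : R), Msum m k <= y <= Msum m k.+1 ->
      f y = Qsum m v k + v k * (y - Msum m k)) ->
  let r := conv_env 0 (Msum m n) f in
  let K := [seq k <- iota 0 n.+1 | r (Msum m k) == Qsum m v k] in
  let l := (size K).-1 in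
  let kk := fun j => nth 0%N K j in
  (* particle i (0-based) belongs to T_j iff k_(j-1) < i+1 <= k_j *)
  let inT := fun (i : 'I_n) j => (kk j.-1 <= i < kk j)%N in
  let slope := fun j => (Qsum m v (kk j) - Qsum m v (kk j.-1)) /
                        (Msum m (kk j) - Msum m (kk j.-1)) in
  [/\ kk 0%N = 0%N, kk l = n,
      (forall i j : 'I_n, same_cluster gam i j <->
          exists j0, [/\ (0 < j0 <= l)%N, inT i j0 & inT j j0]) &
      (forall j0, (0 < j0 <= l)%N -> forall i : 'I_n, inT i j0 ->
          exists T0 : R, forall t, T0 <= t -> right_deriv (gam i) t (slope j0))].
Proof.
move=> hn mpos xinc [pw init stick mom] hf.
destruct n as [|n]; first by [].
exact: (@final_sec R n m x v gam pw init stick mom xinc mpos f hf).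
Qed.
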